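(* Let $\mathcal{C}$ be a Hom-finite Krull-Schmidt additive $k$-category ($k$ a field), and suppose $\mathcal{C}$ has an almost split sequence $$X \xrightarrow{\binom{f_1}{f_2}} Y_1\amalg Y_2 \xrightarrow{(g_1,\,g_2)} Z.$$ Then: (1) there is a $k$-linear isomorphism $k_X\cong k_Z$ between the automorphism fields of $X$ and $Z$; (2) if $u: M\to Y_1$ is a morphism in $\mathcal{C}$ with $g_1u=0$, then there is $w: M\to X$ with $u=f_1w$ and $f_2w=0$; (3) if $v: Y_1\to N$ is a morphism in $\mathcal{C}$ with $vf_1=0$, then there is $w: Z\to N$ with $v=wg_1$ and $wg_2=0$.
   Context: A $k$-category is Hom-finite if all morphism spaces are finite-dimensional over $k$, and Krull-Schmidt if every nonzero object is a finite direct sum of objects with local endomorphism algebras. For an indecomposable object $X$, its automorphism field is $k_X=\mathrm{End}(X)/\mathrm{rad}(X,X)$, where $\mathrm{rad}$ denotes the Jacobson radical of $\mathcal{C}$. A morphism $f:X\to Y$ is left almost split if it is not a section and every non-section morphism $X\to M$ factors through $f$; left minimal if every endomorphism $h$ of $Y$ with $hf=f$ is an automorphism; a source morphism if it is left minimal and left almost split. Dually one defines right almost split, right minimal, and sink morphism. A sequence $X\xrightarrow{f}Y\xrightarrow{g}Z$ with $Y\neq 0$ is almost split if $f$ is a source morphism and a pseudo-kernel of $g$, and $g$ is a sink morphism and a pseudo-cokernel of $f$. In this case $X,Z$ are indecomposable. *)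

(* Defs.v *)
From HB Require Import structures.
From mathcomp Require Import all_boot all_algebra.
Set Implicit Arguments. Unset Strict Implicit. Unset Printing Implicit Defensive.
Import GRing.Theory.
Local Open Scope ring_scope.

Record kcat (k : fieldType) := KCat {
  Ob :> Type;
  Mor : Ob -> Ob -> vectType k;
  comp : forall X Y Z : Ob, Mor Y Z -> Mor X Y -> Mor X Z;
  idm : forall X : Ob, Mor X X;
  compA : forall (W X Y Z : Ob) (h : Mor Y Z) (g : Mor X Y) (f : Mor W X),
      comp h (comp g f) = comp (comp h g) f;
  comp1m : forall (X Y : Ob) (f : Mor X Y), comp (idm Y) f = f;
  compm1 : forall (X Y : Ob) (f : Mor X Y), comp f (idm X) = f;
  comp_linl : forall (X Y Z : Ob) (a : k) (g1 g2 : Mor Y Z) (f : Mor X Y),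
      comp (a *: g1 + g2) f = a *: comp g1 f + comp g2 f;
  comp_linr : forall (X Y Z : Ob) (a : k) (g : Mor Y Z) (f1 f2 : Mor X Y),
      comp g (a *: f1 + f2) = a *: comp g f1 + comp g f2
}.
Arguments Mor {_} _ _ _.
Arguments comp {_ _ _ _ _}.
Arguments idm {_ _}.

Declare Scope kcat_scope.
Notation "g \oc f" := (comp g f) (at level 40, left associativity) : kcat_scope.
Delimit Scope kcat_scope with C.
Local Open Scope kcat_scope.

Section Defs.
Context {k : fieldType} (C : kcat k).

Definition is_iso (X Y : C) (f : Mor C X Y) :=
  exists g : Mor C Y X, g \oc f = idm X /\ f \oc g = idm Y.

Definition is_section (X Y : C) (f : Mor C X Y) :=
  exists g : Mor C Y X, g \oc f = idm X.

Definition is_retraction (X Y : C) (f : Mor C X Y) :=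
  exists g : Mor C Y X, f \oc g = idm Y.

Definition is_zero_obj (X : C) := idm X = 0.

Definition is_biproduct (Y1 Y2 Y : C) (i1 : Mor C Y1 Y) (i2 : Mor C Y2 Y)
    (p1 : Mor C Y Y1) (p2 : Mor C Y Y2) :=
  [/\ p1 \oc i1 = idm Y1, p2 \oc i2 = idm Y2, p1 \oc i2 = 0, p2 \oc i1 = 0
    & i1 \oc p1 + i2 \oc p2 = idm Y].

Definition additive_kcat :=
  (exists O : C, is_zero_obj O) /\
  forall Y1 Y2 : C, exists (Y : C) (i1 : Mor C Y1 Y) (i2 : Mor C Y2 Y)
    (p1 : Mor C Y Y1) (p2 : Mor C Y Y2), is_biproduct i1 i2 p1 p2.

Definition local_end (X : C) :=
  idm X <> 0 /\ forall f : Mor C X X, is_iso f \/ is_iso (idm X - f).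

Definition is_finite_sum (X : C) (n : nat) (Xs : 'I_n -> C)
    (inj : forall i, Mor C (Xs i) X) (proj : forall i, Mor C X (Xs i)) :=
  [/\ forall i, proj i \oc inj i = idm (Xs i),
      forall i j, i != j -> proj j \oc inj i = 0
    & \sum_(i < n) (inj i \oc proj i) = idm X].

Definition krull_schmidt :=
  forall X : C, ~ is_zero_obj X ->
    exists (n : nat) (Xs : 'I_n -> C) (inj : forall i, Mor C (Xs i) X)
           (proj : forall i, Mor C X (Xs i)),
      is_finite_sum inj proj /\ forall i, local_end (Xs i).

Definition rad (X Y : C) (f : Mor C X Y) :=
  forall g : Mor C Y X, is_iso (idm X - g \oc f).

Definition left_almost_split (X Y : C) (f : Mor C X Y) :=
  ~ is_section f /\
  forall (M : C) (h : Mor C X M), ~ is_section h ->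
    exists h' : Mor C Y M, h = h' \oc f.

Definition right_almost_split (Y Z : C) (g : Mor C Y Z) :=
  ~ is_retraction g /\
  forall (M : C) (h : Mor C M Z), ~ is_retraction h ->
    exists h' : Mor C M Y, h = g \oc h'.

Definition left_minimal (X Y : C) (f : Mor C X Y) :=
  forall h : Mor C Y Y, h \oc f = f -> is_iso h.

Definition right_minimal (Y Z : C) (g : Mor C Y Z) :=
  forall h : Mor C Y Y, g \oc h = g -> is_iso h.

Definition source_morphism (X Y : C) (f : Mor C X Y) :=
  left_minimal f /\ left_almost_split f.

Definition sink_morphism (Y Z : C) (g : Mor C Y Z) :=
  right_minimal g /\ right_almost_split g.

Definition pseudo_kernel (X Y Z : C) (f : Mor C X Y) (g : Mor C Y Z) :=
  g \oc f = 0 /\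
  forall (M : C) (h : Mor C M Y), g \oc h = 0 -> exists h' : Mor C M X, h = f \oc h'.

Definition pseudo_cokernel (X Y Z : C) (f : Mor C X Y) (g : Mor C Y Z) :=
  g \oc f = 0 /\
  forall (N : C) (h : Mor C Y N), h \oc f = 0 -> exists h' : Mor C Z N, h = h' \oc g.

Definition almost_split (X Y Z : C) (f : Mor C X Y) (g : Mor C Y Z) :=
  [/\ ~ is_zero_obj Y, source_morphism f, pseudo_kernel f g,
      sink_morphism g & pseudo_cokernel f g].

(* k-linear isomorphism k_X = End(X)/rad(X,X) ~= k_Z = End(Z)/rad(Z,Z),
   expressed through a k-linear map End(X) -> End(Z) inducing a bijection
   of the quotients (every linear map of the quotients lifts). *)
Definition aut_fields_iso (X Z : C) :=
  exists phi : {linear Mor C X X -> Mor C Z Z},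
    (forall f, rad (phi f) <-> rad f) /\
    (forall h : Mor C Z Z, exists f, rad (h - phi f)).

End Defs.

(* Main.v *)
Require Import Defs.
From HB Require Import structures.
From mathcomp Require Import all_boot all_algebra.
Import GRing.Theory.
From Stdlib Require Import Classical.
Local Open Scope ring_scope.
Local Open Scope kcat_scope.

Section Basics.
Context {k : fieldType} {C : kcat k}.

Lemma ccA {W X Y Z : C} (h : Mor C Y Z) (g : Mor C X Y) (f : Mor C W X) :
  h \oc (g \oc f) = (h \oc g) \oc f.
Proof. exact: Defs.compA. Qed.

Lemma comp0l (X Y Z : C) (f : Mor C X Y) : (0 : Mor C Y Z) \oc f = 0.
Proof.
have H := comp_linl 1 (0 : Mor C Y Z) 0 f; rewrite !scale1r !addr0 in H.
by apply: (addrI (0 \oc f)); rewrite addr0 -H.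
Qed.

Lemma comp0r (X Y Z : C) (g : Mor C Y Z) : g \oc (0 : Mor C X Y) = 0.
Proof.
have H := comp_linr 1 g (0 : Mor C X Y) 0; rewrite !scale1r !addr0 in H.
by apply: (addrI (g \oc 0)); rewrite addr0 -H.
Qed.

Lemma compDl (X Y Z : C) (g1 g2 : Mor C Y Z) (f : Mor C X Y) :
  (g1 + g2) \oc f = g1 \oc f + g2 \oc f.
Proof. by have := comp_linl 1 g1 g2 f; rewrite !scale1r. Qed.

Lemma compDr (X Y Z : C) (g : Mor C Y Z) (f1 f2 : Mor C X Y) :
  g \oc (f1 + f2) = g \oc f1 + g \oc f2.
Proof. by have := comp_linr 1 g f1 f2; rewrite !scale1r. Qed.

Lemma compZl (X Y Z : C) a (g : Mor C Y Z) (f : Mor C X Y) :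
  (a *: g) \oc f = a *: (g \oc f).
Proof. by have := comp_linl a g 0 f; rewrite !addr0 comp0l addr0. Qed.

Lemma compZr (X Y Z : C) a (g : Mor C Y Z) (f : Mor C X Y) :
  g \oc (a *: f) = a *: (g \oc f).
Proof. by have := comp_linr a g f 0; rewrite !addr0 comp0r addr0. Qed.

Lemma compNl (X Y Z : C) (g : Mor C Y Z) (f : Mor C X Y) :
  (- g) \oc f = - (g \oc f).
Proof. by rewrite -scaleN1r compZl scaleN1r. Qed.

Lemma compNr (X Y Z : C) (g : Mor C Y Z) (f : Mor C X Y) :
  g \oc (- f) = - (g \oc f).
Proof. by rewrite -scaleN1r compZr scaleN1r. Qed.

Lemma compBl (X Y Z : C) (g1 g2 : Mor C Y Z) (f : Mor C X Y) :
  (g1 - g2) \oc f = g1 \oc f - g2 \oc f.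
Proof. by rewrite compDl compNl. Qed.

Lemma compBr (X Y Z : C) (g : Mor C Y Z) (f1 f2 : Mor C X Y) :
  g \oc (f1 - f2) = g \oc f1 - g \oc f2.
Proof. by rewrite compDr compNr. Qed.

Lemma comp_suml (X Y Z : C) n (G : 'I_n -> Mor C Y Z) (f : Mor C X Y) :
  (\sum_(i < n) G i) \oc f = \sum_(i < n) (G i \oc f).
Proof.
elim/big_rec2: _ => [|i y1 y2 _ <-]; first exact: comp0l.
by rewrite compDl.
Qed.

Lemma comp_sumr (X Y Z : C) n (g : Mor C Y Z) (F : 'I_n -> Mor C X Y) :
  g \oc (\sum_(i < n) F i) = \sum_(i < n) (g \oc F i).
Proof.
elim/big_rec2: _ => [|i y1 y2 _ <-]; first exact: comp0r.
by rewrite compDr.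
Qed.

Lemma iso_comp (X Y Z : C) (u : Mor C Y Z) (v : Mor C X Y) :
  is_iso u -> is_iso v -> is_iso (u \oc v).
Proof.
move=> [u' [H1 H2]] [v' [H3 H4]]; exists (v' \oc u'); split.
  by rewrite ccA -(ccA v') H1 compm1.
by rewrite ccA -(ccA u) H4 compm1.
Qed.

Lemma iso0 (X : C) : is_iso (0 : Mor C X X) -> idm X = 0.
Proof. by move=> [w [H _]]; rewrite -H comp0r. Qed.

End Basics.
Lemma zhelp (V : zmodType) (a b c : V) : a - b = c -> b = a - c.
Proof. by move<-; rewrite opprB addrC subrK. Qed.

Lemma zk (V : zmodType) (x y : V) : y - (y - x) = x.
Proof. exact: subKr. Qed.
Lemma zhelp2 (V : zmodType) (a x y : V) : a - x + (y - (y - x)) = a.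
Proof. by rewrite zk subrK. Qed.
Lemma zhelp3 (V : zmodType) (a x y : V) : a + y - (x + (y - x)) = a.
Proof. by rewrite (addrC x) subrK addrK. Qed.

Section AS.
Context {k : fieldType} (C : kcat k) (X Y Z : C) (f : Mor C X Y) (g : Mor C Y Z).
Context (fns : ~ is_section f)
  (flas : forall (M : C) (h : Mor C X M), ~ is_section h -> exists h', h = h' \oc f)
  (fmin : left_minimal f) (gnr : ~ is_retraction g)
  (gras : forall (M : C) (h : Mor C M Z), ~ is_retraction h -> exists h', h = g \oc h')
  (gmin : right_minimal g) (Ynz : ~ is_zero_obj Y) (gf0 : g \oc f = 0)
  (pk : forall (M : C) (h : Mor C M Y), g \oc h = 0 -> exists h', h = f \oc h')
  (pc : forall (N : C) (h : Mor C Y N), h \oc f = 0 -> exists h', h = h' \oc g).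

Definition NX (a : Mor C X X) := exists h : Mor C Y X, a = h \oc f.
Definition NZ (c : Mor C Z Z) := exists h : Mor C Z Y, c = g \oc h.

Lemma Xnz : idm X <> 0.
Proof. by move=> H; apply: fns; exists 0; rewrite comp0l H. Qed.
Lemma Znz : idm Z <> 0.
Proof. by move=> H; apply: gnr; exists 0; rewrite comp0r H. Qed.

Lemma NX_nonsec a : NX a <-> ~ is_section a.
Proof.
split.
  by move=> [h ->] [r Hr]; apply: fns; exists (r \oc h); rewrite -ccA.
by move=> H; have [h' ->] := flas _ _ H; exists h'.
Qed.
Lemma NX_sub a b : NX a -> NX b -> NX (a - b).
Proof. by move=> [h ->] [h' ->]; exists (h - h'); rewrite compBl. Qed.
Lemma NX_add a b : NX a -> NX b -> NX (a + b).
Proof. by move=> [h ->] [h' ->]; exists (h + h'); rewrite compDl. Qed.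
Lemma NX_left (x : Mor C X X) a : NX a -> NX (x \oc a).
Proof. by move=> [h ->]; exists (x \oc h); rewrite ccA. Qed.
Lemma NX_1 : ~ NX (idm X).
Proof. by move/NX_nonsec; apply; exists (idm X); rewrite comp1m. Qed.

Lemma NX_unit n : NX n -> is_iso (idm X - n).
Proof.
move=> Hn.
have [r Hr] : is_section (idm X - n).
  apply: NNPP => /NX_nonsec H; apply: NX_1.
  by rewrite -(subrK n (idm X)); apply: NX_add.
have [s Hs] : is_section r.
  apply: NNPP => /NX_nonsec H; apply: NX_1.
  rewrite (_ : idm X = r - r \oc n); first by apply: NX_sub => //; apply: NX_left.
  by rewrite -Hr compBr compm1.
have E : s = idm X - n by rewrite -[s]compm1 -{1}Hr ccA Hs comp1m.
by exists r; split => //; rewrite -E.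
Qed.

Lemma NX_dich a : NX a \/ is_iso a.
Proof.
case: (classic (NX a)) => H; [by left | right].
have [r Hr] : is_section a by apply: NNPP => /NX_nonsec.
have Hs : is_section (a \oc r).
  apply: NNPP => /NX_nonsec Har; have [w [Hw _]] := NX_unit _ Har.
  have E : (idm X - a \oc r) \oc a = 0
    by rewrite compBl comp1m -ccA Hr compm1 subrr.
  have a0 : a = 0 by rewrite -[a]comp1m -Hw -ccA E comp0r.
  by apply: Xnz; rewrite -Hr a0 comp0r.
have [t Ht] := Hs.
have ta : t \oc a = a by rewrite -[t \oc a]compm1 -Hr ccA -(ccA t) Ht comp1m.
by exists r; split => //; rewrite -ta -ccA Ht.
Qed.

Lemma NX_iso a : is_iso a -> ~ NX a.
Proof.
by move=> [a' [H1 H2]] [h Ha]; apply: NX_1; exists (a' \oc h); rewrite -ccA -Ha H1.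
Qed.

Lemma rad_NX a : Defs.rad a <-> NX a.
Proof.
split.
  move=> Hr; case: (NX_dich a) => // [[a' [H1 H2]]]; exfalso.
  by have := Hr a'; rewrite H1 subrr => /iso0; exact: Xnz.
by move=> Ha g'; apply: NX_unit; exact: NX_left.
Qed.

Lemma NZ_nonret c : NZ c <-> ~ is_retraction c.
Proof.
split.
  by move=> [h ->] [r Hr]; apply: gnr; exists (h \oc r); rewrite ccA.
by move=> H; have [h' ->] := gras _ _ H; exists h'.
Qed.
Lemma NZ_sub a b : NZ a -> NZ b -> NZ (a - b).
Proof. by move=> [h ->] [h' ->]; exists (h - h'); rewrite compBr. Qed.
Lemma NZ_add a b : NZ a -> NZ b -> NZ (a + b).
Proof. by move=> [h ->] [h' ->]; exists (h + h'); rewrite compDr. Qed.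
Lemma NZ_right (x : Mor C Z Z) a : NZ a -> NZ (a \oc x).
Proof. by move=> [h ->]; exists (h \oc x); rewrite ccA. Qed.
Lemma NZ_1 : ~ NZ (idm Z).
Proof. by move/NZ_nonret; apply; exists (idm Z); rewrite comp1m. Qed.

Lemma NZ_unit n : NZ n -> is_iso (idm Z - n).
Proof.
move=> Hn.
have [r Hr] : is_retraction (idm Z - n).
  apply: NNPP => /NZ_nonret H; apply: NZ_1.
  by rewrite -(subrK n (idm Z)); apply: NZ_add.
have [s Hs] : is_retraction r.
  apply: NNPP => /NZ_nonret H; apply: NZ_1.
  rewrite (_ : idm Z = r - n \oc r); first by apply: NZ_sub => //; apply: NZ_right.
  by rewrite -Hr compBl comp1m.
have E : s = idm Z - n by rewrite -[s]comp1m -{1}Hr -ccA Hs compm1.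
by exists r; split => //; rewrite -E.
Qed.

Lemma NZ_dich c : NZ c \/ is_iso c.
Proof.
case: (classic (NZ c)) => H; [by left | right].
have [s Hr] : is_retraction c by apply: NNPP => /NZ_nonret.
have Hs : is_retraction (s \oc c).
  apply: NNPP => /NZ_nonret Hsc; have [w [_ Hw]] := NZ_unit _ Hsc.
  have E : c \oc (idm Z - s \oc c) = 0
    by rewrite compBr compm1 ccA Hr comp1m subrr.
  have c0 : c = 0 by rewrite -[c]compm1 -Hw ccA E comp0l.
  by apply: Znz; rewrite -Hr c0 comp0l.
have [t Ht] := Hs.
have ct : c \oc t = c by rewrite -[c \oc t]comp1m -Hr -ccA (ccA s) Ht compm1.
by exists s; split => //; rewrite -ct ccA Ht.
Qed.

Lemma NZ_iso c : is_iso c -> ~ NZ c.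
Proof.
by move=> [c' [H1 H2]] [h Hc]; apply: NZ_1; exists (h \oc c'); rewrite ccA -Hc H2.
Qed.

Lemma rad_NZ c : Defs.rad c <-> NZ c.
Proof.
split.
  move=> Hr; case: (NZ_dich c) => // [[c' [H1 H2]]]; exfalso.
  by have := Hr c'; rewrite H1 subrr => /iso0; exact: Znz.
move=> Hc h; have [v [Hv1 Hv2]] := NZ_unit _ (NZ_right h _ Hc).
have K1 : h \oc (v \oc ((idm Z - c \oc h) \oc c)) = h \oc c
  by rewrite (ccA v) Hv1 comp1m.
have K2 : h \oc (((idm Z - c \oc h) \oc v) \oc c) = h \oc c
  by rewrite Hv2 comp1m.
rewrite !compBl !comp1m !compBr !ccA in K1 K2.
have K1' : h \oc v \oc c \oc h \oc c = h \oc v \oc c - h \oc c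
  by apply: zhelp.
have K2' : h \oc c \oc h \oc v \oc c = h \oc v \oc c - h \oc c
  by apply: zhelp.
exists (idm Z + h \oc (v \oc c)); split.
  rewrite compDl comp1m !compBr !compm1 !ccA K1'.
  exact: zhelp2.
rewrite compBl comp1m !compDr !compm1 !ccA K2'.
exact: zhelp3.
Qed.


Lemma f_nz : f <> 0.
Proof. by move=> H; apply: Ynz; apply: iso0; apply: fmin; rewrite H comp0l. Qed.
Lemma g_nz : g <> 0.
Proof. by move=> H; apply: Ynz; apply: iso0; apply: gmin; rewrite H comp0r. Qed.

Lemma lift1 a : exists b c, b \oc f = f \oc a /\ g \oc b = c \oc g.
Proof.
have Hns : ~ is_section (f \oc a).
  move=> [s Hs]; case: (NX_dich a) => [Ha | [a' [H1 H2]]].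
    by apply: (proj1 (NX_nonsec a) Ha); exists (s \oc f); rewrite -ccA.
  have E : s \oc f = a' by rewrite -[s \oc f]compm1 -H2 ccA -(ccA s) Hs comp1m.
  by apply: fns; exists (a \oc s); rewrite -ccA E H2.
have [b Hb] := flas _ _ Hns.
have : (g \oc b) \oc f = 0 by rewrite -ccA -Hb ccA gf0 comp0l.
move/pc => [c Hc]; by exists b, c; split.
Qed.

Lemma lift2 c : exists a b, b \oc f = f \oc a /\ g \oc b = c \oc g.
Proof.
have Hnr : ~ is_retraction (c \oc g).
  move=> [s Hs]; case: (NZ_dich c) => [Hc | [c' [H1 H2]]].
    by apply: (proj1 (NZ_nonret c) Hc); exists (g \oc s); rewrite ccA.
  have E : g \oc s = c' by rewrite -[g \oc s]comp1m -H1 -ccA (ccA c) Hs compm1.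
  by apply: gnr; exists (s \oc c); rewrite ccA E H1.
have [b Hb] := gras _ _ Hnr.
have : g \oc (b \oc f) = 0 by rewrite ccA -Hb -ccA gf0 comp0r.
move/pk => [a Ha]; by exists a, b; split.
Qed.

Lemma compat a b c : b \oc f = f \oc a -> g \oc b = c \oc g -> (NX a <-> NZ c).
Proof.
move=> Hbf Hgb; split.
- move=> [h Ha]; case: (NZ_dich c) => // Hc; exfalso.
  have E1 : (b - f \oc h) \oc f = 0 by rewrite compBl Hbf Ha -ccA subrr.
  have [t Ht] := pc _ _ E1.
  have Hb' : b = f \oc h + t \oc g by rewrite -Ht addrC subrK.
  have E2 : (c - g \oc t) \oc g = 0.
    by rewrite compBl -Hgb Hb' compDr ccA gf0 comp0l add0r ccA subrr.
  have Hiso : is_iso (c - g \oc t).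
    have [c' [H1 H2]] := Hc.
    have -> : c - g \oc t = (idm Z - (g \oc t) \oc c') \oc c
      by rewrite compBl comp1m -ccA H1 compm1.
    apply: iso_comp => //; apply: NZ_unit; exists (t \oc c'); by rewrite ccA.
  have [w [Hw _]] := Hiso.
  by apply: g_nz; rewrite -[g]comp1m -Hw -ccA E2 comp0r.
- move=> [h Hc]; case: (NX_dich a) => // Ha; exfalso.
  have E1 : g \oc (b - h \oc g) = 0 by rewrite compBr Hgb Hc ccA subrr.
  have [t Ht] := pk _ _ E1.
  have Hb' : b = h \oc g + f \oc t by rewrite -Ht addrC subrK.
  have E2 : f \oc (a - t \oc f) = 0.
    by rewrite compBr -Hbf Hb' compDl -ccA gf0 comp0r add0r ccA subrr.
  have Hiso : is_iso (a - t \oc f).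
    have [a' [H1 H2]] := Ha.
    have -> : a - t \oc f = a \oc (idm X - a' \oc (t \oc f))
      by rewrite compBr compm1 ccA H2 comp1m.
    apply: iso_comp => //; apply: NX_unit; exists (a' \oc t); by rewrite ccA.
  have [w [_ Hw]] := Hiso.
  by apply: f_nz; rewrite -[f]compm1 -Hw ccA E2 comp0l.
Qed.
Lemma main1 : aut_fields_iso X Z.
Proof.
pose B := vbasis (fullv : {vspace Mor C X X}).
have : forall i : 'I_(\dim (fullv : {vspace Mor C X X})),
    exists bc : Mor C Y Y * Mor C Z Z,
      bc.1 \oc f = f \oc B`_i /\ g \oc bc.1 = bc.2 \oc g.
  by move=> i; have [b [c H]] := lift1 B`_i; exists (b, c).
case/fin_all_exists => bc Hbc.
pose phif (a : Mor C X X) := \sum_i coord B i a *: (bc i).2.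
pose psif (a : Mor C X X) := \sum_i coord B i a *: (bc i).1.
have Hcomp a : psif a \oc f = f \oc a /\ g \oc psif a = phif a \oc g.
  split.
    rewrite comp_suml.
    under eq_bigr do rewrite compZl (Hbc _).1.
    rewrite {2}(coord_vbasis (memvf a)) comp_sumr; apply: eq_bigr => i _.
    by rewrite compZr.
  rewrite comp_sumr comp_suml; apply: eq_bigr => i _.
  by rewrite compZr compZl (Hbc _).2.
have Hlin : linear phif.
  move=> x a b; rewrite /phif scaler_sumr -big_split; apply: eq_bigr => i _ /=.
  by rewrite linearP /= scalerDl scalerA.
exists (HB.pack_for {linear _ -> _} phif (GRing.isLinear.Build _ _ _ _ phif Hlin)).
split.
  move=> a /=; rewrite rad_NZ rad_NX.
  have [H1 H2] := Hcomp a; have := compat _ _ _ H1 H2; tauto.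
move=> h; have [a [b [H1 H2]]] := lift2 h.
exists a; rewrite rad_NZ /=.
have [H3 H4] := Hcomp a.
have E1 : (b - psif a) \oc f = f \oc 0 by rewrite compBl H1 H3 subrr comp0r.
have E2 : g \oc (b - psif a) = (h - phif a) \oc g by rewrite compBr compBl H2 H4.
by apply/(compat _ _ _ E1 E2); exists 0; rewrite comp0l.
Qed.
End AS.

Theorem lemma1p1 (k : fieldType) (C : kcat k) :
  additive_kcat C -> krull_schmidt C ->
  forall (X Y1 Y2 Y Z : C)
    (i1 : Mor C Y1 Y) (i2 : Mor C Y2 Y) (p1 : Mor C Y Y1) (p2 : Mor C Y Y2),
  is_biproduct i1 i2 p1 p2 ->
  forall (f1 : Mor C X Y1) (f2 : Mor C X Y2) (g1 : Mor C Y1 Z) (g2 : Mor C Y2 Z),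
  almost_split (i1 \oc f1 + i2 \oc f2) (g1 \oc p1 + g2 \oc p2) ->
  [/\ aut_fields_iso X Z,
      (forall (M : C) (u : Mor C M Y1), g1 \oc u = 0 ->
         exists w : Mor C M X, u = f1 \oc w /\ f2 \oc w = 0)
    & (forall (N : C) (v : Mor C Y1 N), v \oc f1 = 0 ->
         exists w : Mor C Z N, v = w \oc g1 /\ w \oc g2 = 0)].
Proof.
move=> _ _ X Y1 Y2 Y Z i1 i2 p1 p2 [Hp1 Hp2 Hp12 Hp21 Hsum] f1 f2 g1 g2
  [Ynz [fmin [fns flas]] [gf0 pk] [gmin [gnr gras]] [_ pc]].
split.
- by eapply main1; eassumption.
- move=> M u Hu.
  have : (g1 \oc p1 + g2 \oc p2) \oc (i1 \oc u) = 0.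
    by rewrite compDl -!ccA (ccA p1) Hp1 comp1m (ccA p2) Hp21 comp0l comp0r Hu addr0.
  move/pk => [w Hw]; exists w; split.
    by rewrite -[u]comp1m -Hp1 -ccA Hw ccA compDr !ccA Hp1 Hp12 comp1m comp0l addr0.
  have E : p2 \oc (i1 \oc u) = f2 \oc w.
    by rewrite Hw ccA compDr !ccA Hp21 Hp2 comp0l comp1m add0r.
  by rewrite -E ccA Hp21 comp0l.
- move=> N v Hv.
  have : (v \oc p1) \oc (i1 \oc f1 + i2 \oc f2) = 0.
    by rewrite compDr !ccA -(ccA v p1 i1) -(ccA v p1 i2) Hp1 Hp12 compm1 comp0r comp0l Hv addr0.
  move/pc => [w Hw]; exists w; split.
    by rewrite -[v]compm1 -Hp1 ccA Hw -ccA compDl -!ccA Hp1 Hp21 compm1 comp0r addr0.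
  have E : (v \oc p1) \oc i2 = w \oc g2.
    by rewrite Hw -ccA compDl -!ccA Hp12 Hp2 comp0r compm1 add0r.
  by rewrite -E -ccA Hp12 comp0r.
Qed.
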